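(* Let $\mathcal X$ be a set, let $\kappa:\mathcal X\to\mathbb N\cup\{\infty\}$ and $A_\theta:\mathcal X\to[0,1]$ be maps, and let $\oplus:\mathcal X\times\mathcal X\to\mathcal X$ be a binary operation. For $x_1,\dots,x_m\in\mathcal X$ with $m\ge 3$, write $x_1\oplus\cdots\oplus x_m$ for the right-associated composition $x_1\oplus(x_2\oplus(\cdots\oplus x_m))$. Suppose we are given a notion of independence for pairs $x,y\in\mathcal X$ and of joint independence for finite families in $\mathcal X$. Define \[ \mathcal X_{\mathrm{fin}}:=\{x\in\mathcal X:\kappa(x)<\infty\},\qquad K:=\kappa(\mathcal X_{\mathrm{fin}})\subseteq\mathbb N. \] Assume the following, on $\mathcal X_{\mathrm{fin}}$: (A1) (Accuracy–complexity monotonicity) For all $x,y\in\mathcal X_{\mathrm{fin}}$, if $\kappa(x)\le\kappa(y)$ then $A_\theta(x)\ge A_\theta(y)$. (A2) (Compositionality) For all independent $x,y\in\mathcal X_{\mathrm{fin}}$, \[ \kappa(x\oplus y)=\kappa(x)+\kappa(y),\qquad A_\theta(x\oplus y)=A_\theta(x)\cdot A_\theta(y). \] (A3) For every $u\in K$ and every $m\in\mathbb N$ ($m\ge1$), there exist $x_1,\dots,x_m\in\mathcal X_{\mathrm{fin}}$ with $\kappa(x_i)=u$ for all $i$ and $\{x_1,\dots,x_m\}$ jointly independent; consequently $x_1\oplus\cdots\oplus x_m$ is valid and \[ \kappa(x_1\oplus\cdots\oplus x_m)=mu\in K,\qquad A_\theta(x_1\oplus\cdots\oplus x_m)=\prod_{i=1}^m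 A_\theta(x_i). \] Then there exists $\lambda_\theta\ge 0$ such that for all $x\in\mathcal X_{\mathrm{fin}}$ with $0<A_\theta(x)\le 1$, \[ A_\theta(x)=\exp\!\big(-\lambda_\theta\,\kappa(x)\big). \]
   Context: Interpretation (not needed for the statement): $\mathcal X$ is a space of questions, $\kappa(x)$ is the complexity of question $x$ (minimal number of primitive solution steps), $A_\theta(x)\in[0,1]$ is the probability that model $\theta$ answers $x$ correctly, and $x\oplus y$ is the composite question formed by concatenating $x$ and $y$ with a connector prompt. Independence of $x,y$ is the abstract relation under which (A2) applies; joint independence of a finite family is the abstract property used in (A3), whose stated consequence (validity of the composition, additivity of $\kappa$ and multiplicativity of $A_\theta$ over the right-associated composition) is part of the assumption. *)

(* Defs.v *)
From mathcomp Require Import all_boot all_order all_algebra.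
From mathcomp Require Import all_classical all_reals all_analysis.
Set Implicit Arguments. Unset Strict Implicit. Unset Printing Implicit Defensive.

Fixpoint rcompose (X : Type) (op : X -> X -> X) (x : X) (s : seq X) : X :=
  match s with
  | [::] => x
  | y :: s' => op x (rcompose op y s')
  end.

(* Main.v *)
Require Import Defs.
From Stdlib Require List.
From mathcomp Require Import all_boot all_order all_algebra.
From mathcomp Require Import all_classical all_reals all_analysis.
Import Order.TTheory GRing.Theory Num.Theory.
Local Open Scope ring_scope.

Lemma prod_const_In (R : realType) (X : Type) (A : X -> R) (c : R) (s : seq X) :
  (forall y, List.In y s -> A y = c) -> \prod_(y <- s) A y = c ^+ size s.
Proof.
elim: s => [|a s IH] H; first by rewrite big_nil expr0.
rewrite big_cons IH; last by move=> y Hy; apply: H; right.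
by rewrite (H a (or_introl erefl)) /= exprS.
Qed.

(* kappa x = None encodes kappa x = infinity; X_fin = {x | exists n, kappa x = Some n}. *)
Theorem proposition2 (R : realType) (X : Type)
  (kappa : X -> option nat) (A : X -> R) (op : X -> X -> X)
  (indep : X -> X -> Prop) (jindep : seq X -> Prop)
  (hA01 : forall x, 0 <= A x <= 1)
  (A1 : forall x y (n k : nat), kappa x = Some n -> kappa y = Some k ->
        (n <= k)%N -> A y <= A x)
  (A2 : forall x y (n k : nat), kappa x = Some n -> kappa y = Some k ->
        indep x y ->
        kappa (op x y) = Some (n + k)%N /\ A (op x y) = A x * A y)
  (A3 : forall (u : nat), (exists x, kappa x = Some u) ->
        forall (m : nat), (1 <= m)%N ->
        exists (x1 : X) (xs : seq X),
          size (x1 :: xs) = m /\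
          (forall x, List.In x (x1 :: xs) -> kappa x = Some u) /\
          jindep (x1 :: xs) /\
          kappa (rcompose op x1 xs) = Some (m * u)%N /\
          A (rcompose op x1 xs) = \prod_(x <- x1 :: xs) A x) :
  exists lam : R, 0 <= lam /\
    forall x (n : nat), kappa x = Some n -> 0 < A x -> A x <= 1 ->
      A x = expR (- (lam * n%:R)).
Proof.
have Aeq : forall x y n, kappa x = Some n -> kappa y = Some n -> A x = A y.
  move=> x y n hx hy; apply/le_anti/andP; split.
    exact: (A1 y x n n hy hx (leqnn n)).
  exact: (A1 x y n n hx hy (leqnn n)).
have Pow : forall x u m, kappa x = Some u -> (1 <= m)%N ->
    exists z, kappa z = Some (m * u)%N /\ A z = A x ^+ m.
  move=> x u m hx hm.
  have [x1 [xs [hs [hin [_ [hk hA]]]]]] := A3 u (ex_intro _ x hx) m hm.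
  exists (rcompose op x1 xs); split => //.
  rewrite hA (@prod_const_In R X A (A x)) ?hs // => y hy.
  exact: (Aeq y x u (hin y hy) hx).
have Zero : forall x, kappa x = Some 0%N -> 0 < A x -> A x = 1.
  move=> x hx hpos.
  have [z [hz hAz]] := Pow x 0%N 2%N hx isT.
  rewrite muln0 in hz.
  have : A x = A x ^+ 2 by rewrite -hAz; exact: (Aeq x z 0%N hx hz).
  rewrite expr2 => /eqP; rewrite -subr_eq0 -{1}(mulr1 (A x)) -mulrBr mulf_eq0.
  rewrite (gt_eqF hpos) /= subr_eq0 => /eqP <-. done.
case: (pselect (exists x0 n0, [/\ kappa x0 = Some n0, (0 < n0)%N & 0 < A x0])).
  move=> [x0 [n0 [h0 hn0 hp0]]].
  exists (- ln (A x0) / n0%:R); split.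
    apply: divr_ge0; last by rewrite ler0n.
    rewrite oppr_ge0; apply: ln_le0; by case/andP: (hA01 x0).
  move=> x n hx hpos _.
  case: n hx => [|n] hx; first by rewrite mulr0 oppr0 expR0; exact: Zero.
  have [z1 [hz1 hA1]] := Pow x n.+1 n0 hx hn0.
  have [z2 [hz2 hA2]] := Pow x0 n0 n.+1 h0 isT.
  rewrite mulnC in hz2.
  have e : A x ^+ n0 = A x0 ^+ n.+1 by rewrite -hA1 -hA2; exact: (Aeq z1 z2 _ hz1 hz2).
  have e2 : ln (A x) *+ n0 = ln (A x0) *+ n.+1 by rewrite -!lnXn // e.
  rewrite -(lnK hpos); congr expR.
  have hn0' : (n0%:R : R) != 0 by rewrite pnatr_eq0 -lt0n.
  apply: (mulfI hn0').
  have e3 : ln (A x) * n0%:R = ln (A x0) * n.+1%:R by rewrite !mulr_natr.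
  rewrite mulrC e3 !mulNr opprK mulrA mulrCA divff //.
  by rewrite (mulr1 (ln (A x0) : R)).
move=> hno; exists 0; split => // x n hx hpos _.
case: n hx => [|n] hx; first by rewrite mulr0 oppr0 expR0; exact: Zero.
by exfalso; apply: hno; exists x, n.+1.
Qed.
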